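(* Let $G$ be a cycle, $H=(T,L)$ a demand digraph, fix a partition of the population and an assignment of cost functions, and let $\sigma$ and $\hat\sigma$ be two equilibria. Let $\ell\in L$ and $i\in I_\ell$ with $\delta(i)\neq 0$. Then exactly one of the following holds: (1) there is $J\subseteq L$ with $\ell\in J$, $A_J\neq\emptyset$, and $\delta(i)\Delta_J<0$; (2) for all $J\subseteq L$ with $\ell\in J$ and $A_J\neq\emptyset$, $\Delta_J=0$.
   Context: Model: supply graph $G=(V,E)$ (here a cycle) with directed version having arc set $A$; simple demand digraph $H=(T,L)$, $T\subseteq V$, whose arcs are OD-pairs; population $I$ a bounded interval with Lebesgue measure $\lambda$, partitioned into measurable $I_\ell$, $\ell\in L$; routes are directed paths in the directed version of $G$ between the endpoints of an OD-pair; strategy profiles are measurable maps assigning to each $i\in I_\ell$ an $\ell$-route; flow $f_a=\lambda\{i:a\in\sigma(i)\}$; each user $i$ has nonnegative continuous strictly increasing costs $c_a^i$ (measurable in $i$), route cost $\sum_{a\in r}c^i_a(f_a)$; an equilibrium is a strategy profile in which every user uses a minimal-cost route for his OD-pair. Fixing an orientation of the cycle, arcs are positive or negative, each $\ell\in L$ has a unique positive route $r_\ell^+$ and unique negative route $r_\ell^-$; for a user $i\in I_\ell$ write $r_i^\pm=r_\ell^\pm$. For $J\subseteq L$, $A_J^+$ is the set of positive arcs lying in $r_\ell^+$ for exactly the $\ell\in J$ (and in no $r_\ell^+$ with $\ell\notin J$), $A_J^-$ analogously for negative arcs, $A_J=A_J^+\cup A_J^-$. For a strategy profile $\sigma$ and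 $J\subseteq L$, $f_J^{+}=\lambda\{i\in\bigcup_{\ell\in J}I_\ell:\sigma(i)=r_i^+\}$, $f_J^-=\lambda\{i\in\bigcup_{\ell\in J}I_\ell:\sigma(i)=r_i^-\}$, and hatted quantities refer to $\hat\sigma$. Define $\Delta_J=f_J^+-\hat f_J^+=\hat f_J^--f_J^-$ and $\delta(i)=\mathbf 1[\sigma(i)=r_i^+]-\mathbf 1[\hat\sigma(i)=r_i^+]$. *)

(* Defs.v *)
From mathcomp Require Import all_boot.
From Stdlib Require Import Reals ClassicalEpsilon.

Set Implicit Arguments.
Unset Strict Implicit.
Unset Printing Implicit Defensive.

Definition cover_sum (A : R -> Prop) (s : R) : Prop :=
  exists a b : nat -> R,
    (forall k, (a k <= b k)%R) /\
    (forall x, A x -> exists k, (a k < x < b k)%R) /\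
    infinite_sum (fun k => (b k - a k)%R) s.

Definition is_outer_measure (A : R -> Prop) (m : R) : Prop :=
  (forall s, cover_sum A s -> (m <= s)%R) /\
  (forall m', (forall s, cover_sum A s -> (m' <= s)%R) -> (m' <= m)%R).

(* Caratheodory criterion (tested on sets of finite outer measure, which is
   equivalent to the usual one since infinite case holds by subadditivity). *)
Definition leb_measurable (E : R -> Prop) : Prop :=
  forall A m, is_outer_measure A m ->
    exists m1 m2, is_outer_measure (fun x => A x /\ E x) m1 /\
                  is_outer_measure (fun x => A x /\ ~ E x) m2 /\
                  m = (m1 + m2)%R.

Definition lam (E : R -> Prop) : R :=
  epsilon (inhabits 0%R) (is_outer_measure E).

Definition bounded_interval (I : R -> Prop) : Prop :=
  (forall x y z, I x -> I z -> (x <= y <= z)%R -> I y) /\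
  (exists M, forall x, I x -> (Rabs x <= M)%R).

(* ---------- The cycle G on vertices 'I_n ----------
   Edge k joins k and k+1 (mod n).  Directed version: arc (k, true) is the
   positive arc k -> k+1, arc (k, false) is the negative arc k+1 -> k.  The route choice b = true is the
   unique positive route r^+ from s to t (s -> s+1 -> ... -> t), b = false the
   unique negative route r^- (s -> s-1 -> ... -> t). *)

Definition carc (n : nat) := ('I_n * bool)%type.

Definition on_route (n : nat) (l : 'I_n * 'I_n) (b : bool) (a : carc n) : bool :=
  (a.2 == b) &&
  (if b then ((a.1 + n - l.1) %% n < (l.2 + n - l.1) %% n)
        else ((a.1 + n - l.2) %% n < (l.1 + n - l.2) %% n)).

Definition route_cost (n : nat) (c : R -> carc n -> R -> R) (f : carc n -> R)
  (i : R) (l : 'I_n * 'I_n) (b : bool) : R :=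
  \big[Rplus/0%R]_(a : carc n | on_route l b a) c i a (f a).

(* users i are in I, user i belongs to I_{od i}; sigma i = true iff i uses r^+ *)
Definition flow (n : nat) (I : R -> Prop) (od : R -> 'I_n * 'I_n)
  (sigma : R -> bool) (a : carc n) : R :=
  lam (fun i => I i /\ on_route (od i) (sigma i) a).

Definition strategy_measurable (n : nat) (I : R -> Prop)
  (od : R -> 'I_n * 'I_n) (sigma : R -> bool) : Prop :=
  forall l b, leb_measurable (fun i => I i /\ od i = l /\ sigma i = b).

Definition admissible_costs (n : nat) (I : R -> Prop)
  (c : R -> carc n -> R -> R) : Prop :=
  (forall i, I i -> forall a,
     (forall x, (0 <= x)%R -> (0 <= c i a x)%R) /\
     (forall x y, (0 <= x)%R -> (x < y)%R -> (c i a x < c i a y)%R) /\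
     (forall x, (0 <= x)%R ->
        limit1_in (c i a) (fun y => (0 <= y)%R) (c i a x) x)) /\
  (forall a x y, leb_measurable (fun i => I i /\ (c i a x < y)%R)).

Definition equilibrium (n : nat) (I : R -> Prop) (od : R -> 'I_n * 'I_n)
  (c : R -> carc n -> R -> R) (sigma : R -> bool) : Prop :=
  forall i, I i -> forall b,
    (route_cost c (flow I od sigma) i (od i) (sigma i)
     <= route_cost c (flow I od sigma) i (od i) b)%R.

Definition fJ (n : nat) (I : R -> Prop) (od : R -> 'I_n * 'I_n)
  (sigma : R -> bool) (J : {set 'I_n * 'I_n}) (b : bool) : R :=
  lam (fun i => I i /\ od i \in J /\ sigma i = b).

Definition DeltaJ (n : nat) (I : R -> Prop) (od : R -> 'I_n * 'I_n)
  (sigma sigmah : R -> bool) (J : {set 'I_n * 'I_n}) : R :=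
  (fJ I od sigma J true - fJ I od sigmah J true)%R.

Definition delta (sigma sigmah : R -> bool) (i : R) : R :=
  ((if sigma i then 1 else 0) - (if sigmah i then 1 else 0))%R.

(* A_J <> empty: some arc a (of sign a.2) lies on the route of sign a.2 of
   exactly the OD-pairs l in J (among those of L). *)
Definition AJ_nonempty (n : nat) (L J : {set 'I_n * 'I_n}) : Prop :=
  exists a : carc n, [set l in L | on_route l a.2 a] = J.

(* Main.v *)
From HB Require Import structures.
Require Import Defs.
From mathcomp Require Import all_boot.
From Stdlib Require Import Reals ClassicalEpsilon Lra.
From Stdlib Require Import FunctionalExtensionality PropExtensionality Classical.
Set Implicit Arguments.
Local Open Scope R_scope.


Lemma sum_nonneg (f : nat -> R) : (forall k, 0 <= f k) -> forall n, 0 <= sum_f_R0 f n.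
Proof. move=> H; elim=> [|k IH] /=; [apply H|]; have := H k.+1; lra. Qed.

Lemma inf_sum_nonneg (f : nat -> R) s : (forall k, 0 <= f k) -> infinite_sum f s -> 0 <= s.
Proof.
move=> H Hs; apply Rnot_lt_le => hs.
have [N HN] := Hs (- s) ltac:(lra).
have := HN N (le_n N); have := sum_nonneg _ H N.
rewrite /Rdist => h1; rewrite Rabs_right; lra.
Qed.

Lemma inf_sum_single (f : nat -> R) v : f 0%nat = v -> (forall k, f (S k) = 0) -> infinite_sum f v.
Proof.
move=> H0 HS eps he; exists 0%nat => m _.
have -> : sum_f_R0 f m = v.
  elim: m => [|m IH] /=; [by []|]. rewrite IH HS; lra.
rewrite /Rdist Rminus_diag Rabs_R0; lra.
Qed.

Lemma cover_nonneg A s : cover_sum A s -> 0 <= s.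
Proof. case=> a [b [H1 [_ H3]]]; apply: (inf_sum_nonneg _ H3) => k; have := H1 k; lra. Qed.

Definition bnd (A : R -> Prop) := exists M, forall x, A x -> Rabs x <= M.

Lemma outer_unique A m1 m2 : is_outer_measure A m1 -> is_outer_measure A m2 -> m1 = m2.
Proof. case=> H1 H2 [H3 H4]; apply Rle_antisym; [apply H4|apply H2]; done. Qed.

Lemma outer_exists A : bnd A -> exists m, is_outer_measure A m.
Proof.
case=> M HM.
set S := fun y => exists s, cover_sum A s /\ y = - s.
have Sb : bound S. exists 0 => y [s [Hs ->]]; have := cover_nonneg Hs; lra.
have Sne : exists x, S x.
  exists (- (2 * (Rabs M + 1))), (2 * (Rabs M + 1)); split; last by [].
  exists (fun k => if k is 0%nat then - (Rabs M + 1) else 0),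
         (fun k => if k is 0%nat then (Rabs M + 1) else 0).
  split; [case=> [|k] /=; have := Rabs_pos M; lra|split].
  - move=> x Ax; exists 0%nat => /=; have := HM x Ax; have := Rle_abs M.
    have := Rle_abs x; have := Rle_abs (- x); rewrite Rabs_Ropp; lra.
  - apply: inf_sum_single => [|k] /=; lra.
have [l [Hl1 Hl2]] := completeness _ Sb Sne.
exists (- l); split.
- move=> s Hs; have : S (- s) by exists s.
  move/Hl1; lra.
- move=> m' Hm'; suff : l <= - m' by lra.
  apply Hl2 => y [s [Hs ->]]; have := Hm' s Hs; lra.
Qed.

Lemma lam_spec A : bnd A -> is_outer_measure A (lam A).
Proof. move=> hb; rewrite /lam; apply: epsilon_spec; exact: outer_exists. Qed.

Lemma lam_ge0 A : bnd A -> 0 <= lam A.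
Proof. move=> /lam_spec [_ H]; apply H => s; exact: cover_nonneg. Qed.

Lemma lam_ext A B : (forall x, A x <-> B x) -> lam A = lam B.
Proof.
move=> H; have -> : A = B; last by [].
apply: functional_extensionality => x; apply: propositional_extensionality; exact: H.
Qed.

Lemma lam_empty A : (forall x, ~ A x) -> lam A = 0.
Proof.
move=> H; apply: (@outer_unique A); last first.
  split; [move=> s; exact: cover_nonneg|].
  move=> m' Hm'; apply Hm'; exists (fun _ => 0), (fun _ => 0); split; [move=> ?; lra|split].
  - by move=> x /H.
  - apply: inf_sum_single => *; lra.
apply lam_spec; exists 0 => x /H.
by [].
Qed.

Lemma bnd_sub A B : bnd B -> (forall x, A x -> B x) -> bnd A.
Proof. case=> M HM H; exists M => x /H; exact: HM. Qed.

Lemma lam_split A E : bnd A -> leb_measurable E ->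
  lam A = lam (fun x => A x /\ E x) + lam (fun x => A x /\ ~ E x).
Proof.
move=> hb hE; have [m1 [m2 [H1 [H2 ->]]]] := hE _ _ (lam_spec hb).
rewrite (outer_unique (lam_spec (@bnd_sub _ _ hb (fun x (h : A x /\ E x) => proj1 h))) H1).
by rewrite (outer_unique (lam_spec (@bnd_sub _ _ hb (fun x (h : A x /\ ~ E x) => proj1 h))) H2).
Qed.

Section S.
Variable n : nat.
Variable I : R -> Prop.
Variable od : R -> 'I_n * 'I_n.
Hypothesis hI : bnd I.

Lemma bI A : (forall x, A x -> I x) -> bnd A.
Proof. exact: bnd_sub hI. Qed.

Lemma fJ_seq (sigma : R -> bool) (hs : strategy_measurable I od sigma) b (s : seq ('I_n * 'I_n)) :
  uniq s -> lam (fun i => I i /\ od i \in s /\ sigma i = b) =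
  \big[Rplus/0]_(l <- s) lam (fun i => I i /\ od i = l /\ sigma i = b).
Proof.
elim: s => [|x s IH] /=.
  move=> _; rewrite big_nil; apply: lam_empty => i [_ []]; by rewrite in_nil.
case/andP=> xs us; rewrite big_cons -IH //.
rewrite (lam_split (E := fun i => I i /\ od i = x /\ sigma i = b)); last first.
- exact: hs.
- by apply: bI => i [].
f_equal; apply: lam_ext => i; split.
- by case=> [[Ii [_ sb]] [_ [ox _]]].
- case=> Ii [ox sb]; split => //; split => //; split => //; by rewrite ox mem_head.
- case=> [[Ii [oi sb]] nE]; split => //; split => //.
  move: oi; rewrite in_cons => /orP [/eqP ox|//]; by case: nE.
- case=> Ii [oi sb]; split; first by split => //; split => //; rewrite in_cons oi orbT.
  case=> _ [ox _]; move: xs; by rewrite -ox oi.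
Qed.

Lemma fJ_enum (sigma : R -> bool) (hs : strategy_measurable I od sigma) J b :
  fJ I od sigma J b = \big[Rplus/0]_(l <- enum J) lam (fun i => I i /\ od i = l /\ sigma i = b).
Proof.
rewrite /fJ -fJ_seq ?enum_uniq //; apply lam_ext => i; by rewrite mem_enum.
Qed.

Lemma big_addR (T : Type) (s : seq T) (F G : T -> R) :
  \big[Rplus/0]_(x <- s) (F x + G x) = \big[Rplus/0]_(x <- s) F x + \big[Rplus/0]_(x <- s) G x.
Proof. elim: s => [|x s IH]; rewrite ?big_nil ?big_cons; [lra|rewrite IH; lra]. Qed.

Lemma fJ_tot (sigma : R -> bool) (hs : strategy_measurable I od sigma) J :
  fJ I od sigma J true + fJ I od sigma J false =
  \big[Rplus/0]_(l <- enum J) lam (fun i => I i /\ od i = l).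
Proof.
rewrite !fJ_enum // -big_addR; apply: eq_bigr => l _.
rewrite [RHS](lam_split (E := fun i => I i /\ od i = l /\ sigma i = true)); last first.
- exact: hs.
- by apply: bI => i [].
f_equal; apply: lam_ext => i; split.
- by case=> Ii [oi sb].
- by case=> [_ h].
- case=> Ii [oi sb]; split => //; case=> _ [_]; by rewrite sb.
- case=> [[Ii oi] nE]; split => //; split => //; case: (sigma i) nE => //; by case.
Qed.

Lemma fJ_same sigma sigmah (hs : strategy_measurable I od sigma)
  (hsh : strategy_measurable I od sigmah) J :
  fJ I od sigma J true + fJ I od sigma J false =
  fJ I od sigmah J true + fJ I od sigmah J false.
Proof. by rewrite !fJ_tot. Qed.
End S.

Lemma RplusA' : associative Rplus. Proof. move=> x y z; lra. Qed.
Lemma RplusC' : commutative Rplus. Proof. move=> x y; lra. Qed.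
Lemma Rplus0' : left_id 0 Rplus. Proof. move=> x; lra. Qed.
HB.instance Definition _ := Monoid.isComLaw.Build R 0 Rplus RplusA' RplusC' Rplus0'.

Lemma sum_le (T : finType) (P : pred T) (x y : T -> R) :
  (forall a, P a -> x a <= y a) ->
  \big[Rplus/0]_(a | P a) x a <= \big[Rplus/0]_(a | P a) y a.
Proof. move=> H; apply: (big_ind2 (fun u v => u <= v)) => //; [lra|move=> *; lra]. Qed.

Lemma sum_le_eq (T : finType) (P : pred T) (x y : T -> R) :
  (forall a, P a -> x a <= y a) ->
  \big[Rplus/0]_(a | P a) x a = \big[Rplus/0]_(a | P a) y a ->
  forall a, P a -> x a = y a.
Proof.
move=> H E a Pa; move: E; rewrite (bigD1 a Pa) [in RHS](bigD1 a Pa) /=.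
have : \big[Rplus/0]_(a0 | P a0 && (a0 != a)) x a0 <= \big[Rplus/0]_(a0 | P a0 && (a0 != a)) y a0.
  by apply: sum_le => a0 /andP [h _]; apply: H.
have := H a Pa; lra.
Qed.

Lemma on_route_split n (l : 'I_n * 'I_n) b (a : carc n) :
  on_route l b a = (a.2 == b) && on_route l a.2 a.
Proof. rewrite /on_route; case: eqP => [->|] //=; by rewrite eqxx. Qed.

Definition Ja n (L : {set 'I_n * 'I_n}) (a : carc n) := [set l' in L | on_route l' a.2 a].

Lemma flow_fJ n (I : R -> Prop) od (L : {set 'I_n * 'I_n}) sigma
  (Hod : forall i, I i -> od i \in L) a :
  flow I od sigma a = fJ I od sigma (Ja L a) a.2.
Proof.
rewrite /flow /fJ; apply: lam_ext => i; rewrite /Ja inE on_route_split; split.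
- case=> Ii /andP [/eqP h1 h2]; split => //; rewrite Hod //; split => //.
- case=> Ii [/andP [_ h] h2]; split => //; by rewrite h2 eqxx.
Qed.
Local Close Scope R_scope.
Unset Implicit Arguments.
Theorem lemma1 (n : nat) (Hn : 3 <= n)
  (L : {set 'I_n * 'I_n}) (HL : forall l, l \in L -> l.1 != l.2)
  (I : R -> Prop) (HI : bounded_interval I)
  (od : R -> 'I_n * 'I_n) (Hod : forall i, I i -> od i \in L)
  (Hpart : forall l, l \in L -> leb_measurable (fun i => I i /\ od i = l))
  (c : R -> carc n -> R -> R) (Hc : admissible_costs I c)
  (sigma sigmah : R -> bool)
  (Hsm : strategy_measurable I od sigma)
  (Hshm : strategy_measurable I od sigmah)
  (Heq : equilibrium I od c sigma)
  (Heqh : equilibrium I od c sigmah)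
  (l : 'I_n * 'I_n) (Hl : l \in L)
  (i : R) (Hi : I i) (Hil : od i = l)
  (Hd : delta sigma sigmah i <> 0%R) :
  let P1 := exists J : {set 'I_n * 'I_n},
              [/\ J \subset L, l \in J, AJ_nonempty L J &
                  (delta sigma sigmah i * DeltaJ I od sigma sigmah J < 0)%R] in
  let P2 := forall J : {set 'I_n * 'I_n},
              J \subset L -> l \in J -> AJ_nonempty L J ->
              DeltaJ I od sigma sigmah J = 0%R in
  (P1 /\ ~ P2) \/ (~ P1 /\ P2).
Proof.
move=> P1 P2.
have hb : bnd I by case: HI.
have key : ~ P1 -> P2.
  move=> nP1.
  have hbh : sigmah i = ~~ sigma i.
    move: Hd; rewrite /delta; case: (sigma i); case: (sigmah i) => //= h;
    by exfalso; apply: h; lra.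
  move: hbh; set b := sigma i => hbh.
  pose G J b' := (fJ I od sigma J b' - fJ I od sigmah J b')%R.
  have Gneg J : G J (~~ b) = (- G J b)%R.
    have := fJ_same hb Hsm Hshm J; rewrite /G; case: b {hbh} => /=; lra.
  have dD J : (delta sigma sigmah i * DeltaJ I od sigma sigmah J)%R = G J b.
    have := fJ_same hb Hsm Hshm J.
    rewrite /delta /DeltaJ /G hbh -/b; case: b {hbh Gneg} => /=; lra.
  have Gge (J : {set 'I_n * 'I_n}) : J \subset L -> l \in J -> AJ_nonempty L J -> (0 <= G J b)%R.
    move=> h1 h2 h3; apply: Rnot_lt_le => h; apply: nP1; exists J; split => //.
    by rewrite dD.
  set f := flow I od sigma; set fh := flow I od sigmah.
  have hfa a : (f a - fh a)%R = G (Ja L a) a.2.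
    by rewrite /f /fh !(flow_fJ _ _ _ Hod).
  have ron b' a : on_route l b' a -> a.2 = b' /\ l \in Ja L a.
    rewrite on_route_split => /andP [/eqP h1 h2]; split => //.
    by rewrite /Ja inE Hl h2.
  have GJa b' a : on_route l b' a -> (0 <= G (Ja L a) b)%R.
    move=> /ron [_ h]; apply: Gge => //; last by exists a.
    by apply/subsetP => x; rewrite /Ja inE => /andP [].
  have le1 a : on_route l b a -> (fh a <= f a)%R.
    move=> h; have := GJa _ _ h; have := hfa a; case: (ron _ _ h) => -> _; lra.
  have le2 a : on_route l (~~ b) a -> (f a <= fh a)%R.
    move=> h; have := GJa _ _ h; have := hfa a; case: (ron _ _ h) => -> _.
    rewrite Gneg; lra.
  have nnf a : (0 <= f a)%R by rewrite /f /fh /flow; apply: lam_ge0; apply: (bI hb) => x [].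
  have nnfh a : (0 <= fh a)%R by rewrite /f /fh /flow; apply: lam_ge0; apply: (bI hb) => x [].
  have mono a x y : (0 <= x)%R -> (x <= y)%R -> (c i a x <= c i a y)%R.
    move=> hx hxy; case: (Rle_lt_or_eq_dec _ _ hxy) => [h|->]; last lra.
    have [_ [H _]] := (Hc.1 i Hi a); by apply: Rlt_le; apply: H.
  have inj a x y : (0 <= x)%R -> (0 <= y)%R -> c i a x = c i a y -> x = y.
    move=> hx hy E; have [_ [H _]] := (Hc.1 i Hi a).
    case: (Rtotal_order x y) => [h|[//|h]].
    - by have := H _ _ hx h; lra.
    - by have := H _ _ hy h; lra.
  have s1 : (route_cost c fh i l b <= route_cost c f i l b)%R.
    by apply: sum_le => a h; apply: mono => //; apply: le1.
  have s2 : (route_cost c f i l (~~ b) <= route_cost c fh i l (~~ b))%R.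
    by apply: sum_le => a h; apply: mono => //; apply: le2.
  have e1 := Heq i Hi (~~ b); rewrite Hil -/b -/f in e1.
  have e2 := Heqh i Hi b; rewrite Hil hbh -/fh in e2.
  have E1 : route_cost c fh i l b = route_cost c f i l b by lra.
  have E2 : route_cost c f i l (~~ b) = route_cost c fh i l (~~ b) by lra.
  have q1 a : on_route l b a -> f a = fh a.
    move=> h; symmetry; apply: (inj a) => //.
    apply: (@sum_le_eq _ (fun a => on_route l b a) _ _ _ E1 a h) => a0 h0.
    by apply: mono => //; apply: le1.
  have q2 a : on_route l (~~ b) a -> f a = fh a.
    move=> h; apply: (inj a) => //.
    apply: (@sum_le_eq _ (fun a => on_route l (~~ b) a) _ _ _ E2 a h) => a0 h0.
    by apply: mono => //; apply: le2.
  move=> J hJL hlJ [a ha].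
  have hr : on_route l a.2 a by move: hlJ; rewrite -ha inE => /andP [].
  have G0 : G J b = 0%R.
    have := hfa a; rewrite /Ja ha.
    case hab : (a.2 == b); move/eqP: hab => hab.
    - rewrite hab in hr *; rewrite q1 //; lra.
    - have hab' : a.2 = ~~ b by case: (a.2) (b) hab => [] [].
      rewrite hab' in hr *; rewrite q2 // Gneg; lra.
  have := Gneg J; move: G0; rewrite /DeltaJ /G; case: b {hbh Gneg dD Gge GJa le1 le2 s1 s2 e1 e2 E1 E2 q1 q2 G hfa ron}; simpl; lra.
case: (classic P2) => hP2.
- right; split => //; case=> J [hJL hlJ hA hlt].
  by rewrite (hP2 J hJL hlJ hA) Rmult_0_r in hlt; lra.
- left; split => //; apply: NNPP => h; exact: hP2 (key h).
Qed.
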